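(* Let $\mathcal B=\{B_1,\dots,B_m\}$ be a partition of $n$ jobs with processing times $p_1,\dots,p_n$ into $m$ bags. Then $\mathcal B$ is a $\max\{2,\beta(\mathcal B)\}$-robust partition, where $\beta(\mathcal B)=\frac{\max_{B\in\mathcal B,|B|\ge2}p(B)}{\min_{B\in\mathcal B}p(B)}$.
   Context: Jobs $j\in[n]$ have processing times $p_j\ge0$; for a bag $B\subseteq[n]$, $p(B)=\sum_{j\in B}p_j$. For machines with speeds $s_1,\dots,s_m>0$, processing job $j$ on machine $i$ takes time $p_j/s_i$, and the makespan of an assignment is $\max_i(\text{total processing time on } i)/s_i$; $opt(\mathbf p,\mathbf s)$ denotes the minimum makespan over all assignments of the individual jobs to the machines. A partition $\mathcal B$ of the jobs into $m$ bags is $\gamma$-robust if for every speed vector $\mathbf s=(s_1,\dots,s_m)>0$ there is an assignment of the bags (each bag as a whole) to the $m$ machines with makespan at most $\gamma\cdot opt(\mathbf p,\mathbf s)$. *)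

(* Defs.v *)
From mathcomp Require Import all_boot all_order all_algebra.
Set Implicit Arguments. Unset Strict Implicit. Unset Printing Implicit Defensive.
Import Order.TTheory GRing.Theory Num.Theory.
Local Open Scope ring_scope.

Section Sched.
Variables (R : realFieldType) (n m : nat).

Definition load (p : 'I_n -> R) (f : 'I_n -> 'I_m) (i : 'I_m) : R :=
  \sum_(j < n | f j == i) p j.

Definition makespan (p : 'I_n -> R) (s : 'I_m -> R) (a : 'I_n -> 'I_m) : R :=
  \big[Num.max/0]_(i < m) (load p a i / s i).

(* a partition into m bags is given by b : jobs -> bags (job j lies in bag b j);
   p(B_k) = load p b k.  An assignment of bags to machines is sigma : bags -> machines;
   each job of bag k then runs on machine sigma k. *)

(* makespan <= gamma * opt, with opt the minimum over all job assignments a *)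
Definition robust (p : 'I_n -> R) (b : 'I_n -> 'I_m) (gamma : R) : Prop :=
  forall s : 'I_m -> R, (forall i, 0 < s i) ->
  exists sigma : 'I_m -> 'I_m,
    forall a : 'I_n -> 'I_m,
      makespan p s (fun j => sigma (b j)) <= gamma * makespan p s a.

(* beta(B) = max_{|B|>=2} p(B) / min_B p(B); the empty max is 0.
   The min is taken with neutral element the total processing time, which is an
   upper bound of all p(B), so it is the true minimum whenever m > 0. *)
Definition total (p : 'I_n -> R) : R := \sum_(j < n) p j.

Definition beta (p : 'I_n -> R) (b : 'I_n -> 'I_m) : R :=
  (\big[Num.max/0]_(k < m | (1 < #|[set j | b j == k]|)%N) load p b k)
  / (\big[Num.min/total p]_(k < m) load p b k).

End Sched.

(* Main.v *)
Require Import Defs.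
From mathcomp Require Import all_boot all_order all_algebra.
From mathcomp Require Import ring lra.
Import Order.TTheory GRing.Theory Num.Theory.
Local Open Scope ring_scope.

Section Proof.
Variables (R : realFieldType) (n m : nat) (p : 'I_n -> R) (b : 'I_n -> 'I_m).
Hypothesis hp : forall j, 0 <= p j.
Hypothesis hq : forall k : 'I_m, 0 < load p b k.

Let q := load p b.
Let gam := Num.max 2 (beta p b).

Lemma gam2 : 2 <= gam. Proof. by rewrite le_max lexx. Qed.
Lemma gamb : beta p b <= gam. Proof. by rewrite le_max lexx orbT. Qed.
Lemma gam0 : 0 <= gam. Proof. exact: le_trans _ gam2. Qed.

Lemma sum_load (f : 'I_n -> 'I_m) : \sum_i load p f i = \sum_j p j.
Proof.
rewrite (partition_big f xpredT) //=.
Qed.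

Lemma load_ge0 (f : 'I_n -> 'I_m) i : 0 <= load p f i.
Proof. by apply: sumr_ge0 => j _. Qed.

Lemma sumL (S : {set 'I_m}) (sg : 'I_m -> 'I_m) :
  \sum_i \sum_(k in S | sg k == i) q k = \sum_(k in S) q k.
Proof.
by rewrite [RHS](partition_big sg xpredT) //=.
Qed.

Lemma single j : ~~ (1 < #|[set j' | b j' == b j]|)%N -> q (b j) = p j.
Proof.
move=> h; rewrite /q /load (bigD1 j) //= big1 ?addr0 // => j' /andP [hj' hne].
exfalso; move/negP: h; apply.
have : [set j; j'] \subset [set j' | b j' == b j].
  by apply/subsetP => z; rewrite !inE => /orP [] /eqP ->; rewrite ?eqxx.
move/subset_leq_card; rewrite cards2 eq_sym hne; done.
Qed.


Lemma q_sum : \sum_k q k = \sum_j p j.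
Proof. exact: sum_load. Qed.

Lemma case1 x k0 : (1 < #|[set j | b j == k0]|)%N -> q x <= q k0 ->
  forall k, q x <= gam * q k.
Proof.
move=> hk0 hx k.
set Mx := \big[Num.max/0]_(k < m | (1 < #|[set j | b j == k]|)%N) load p b k.
set mn := \big[Num.min/Defs.total p]_(k < m) load p b k.
have hM : q k0 <= Mx by apply: (le_bigmax_cond _ (fun k => load p b k)).
have mnk : mn <= q k by exact: bigmin_le.
have mn0 : 0 < mn.
  rewrite /mn; elim/big_ind: _ => //.
  - rewrite /Defs.total -q_sum (bigD1 x) //=; apply: ltr_wpDr; last exact: hq.
    by apply: sumr_ge0 => i _; apply: ltW.
  - by move=> u v hu hv; rewrite lt_min hu hv.
have hbeta : Mx = beta p b * mn by rewrite /beta -/Mx -/mn divfK // gt_eqF.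
apply: (le_trans hx); apply: (le_trans hM); rewrite hbeta.
apply: (le_trans (y := gam * mn)); first by apply: ler_wpM2r; [exact: ltW|exact: gamb].
by apply: ler_wpM2l; [exact: gam0|].
Qed.

Lemma key (a : 'I_n -> 'I_m) (C : 'I_m -> R) (hC : forall i, load p a i <= C i)
  (S : {set 'I_m}) (sg : 'I_m -> 'I_m) (x : 'I_m) :
  x \notin S -> (forall k, k \notin S -> q k <= q x) ->
  (forall k, k \in S -> q x <= q k) ->
  exists i, \sum_(k in S | sg k == i) q k + q x <= gam * C i.
Proof.
move=> hxS hmax hmin.
case: (boolP [exists i, \sum_(k in S | sg k == i) q k + q x <= gam * C i]).
  by move/existsP.
move/existsPn => H; exfalso.
have H' : forall i, gam * C i < \sum_(k in S | sg k == i) q k + q x.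
  by move=> i; rewrite ltNge; apply: H.
set L := fun i => \sum_(k in S | sg k == i) q k.
have L0 : forall i, 0 <= L i by move=> i; apply: sumr_ge0 => k _; apply: ltW.
have hsumL : \sum_i L i = \sum_(k in S) q k by apply: sumL.
have hA : \sum_(k in S) q x <= \sum_(k in S) q k by apply: ler_sum => k; apply: hmin.
have hsplit : \sum_k q k = \sum_(k in S) q k + \sum_(k | k \notin S) q k.
  by rewrite (bigID (mem S)).
case: (boolP [exists k0, (1 < #|[set j | b j == k0]|)%N && (q x <= q k0)]).
- case/existsP => k0 /andP [hk0 hxk0].
  have hx : forall k, q x <= gam * q k.
  exact: (case1 x k0 hk0 hxk0).
  have hU : \sum_(k | k \notin S) q x <= gam * \sum_(k | k \notin S) q k.
    by rewrite mulr_sumr; apply: ler_sum => k _; apply: hx.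
  have hlt : \sum_i gam * (load p a i - L i) < \sum_i (q x - L i).
    apply: ltr_sum; first by apply/hasP; exists x; rewrite ?mem_index_enum.
    move=> i _; have := H' i; have := hC i; have := L0 i; have := gam2.
    rewrite -/(L i) => g2 l0 hc h.
    have : gam * load p a i <= gam * C i by apply: ler_wpM2l; [exact: gam0|].
    rewrite mulrBr; nra.
  move: hlt; rewrite -mulr_sumr sumrB sumrB sum_load -q_sum hsumL hsplit.
  have hx2 : \sum_(i < m) q x = \sum_(k in S) q x + \sum_(k | k \notin S) q x.
    by rewrite (bigID (mem S)).
  rewrite hx2; lra.
- move/existsPn => Hn.
  set P := fun j => q x <= q (b j).
  set o' := fun i => \sum_(j | (a j == i) && P j) p j.
  have s1 : \sum_i o' i = \sum_(j | P j) p j.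
    rewrite [RHS](partition_big a xpredT) //=; apply: eq_bigr => i _.
    by apply: eq_bigl => j; rewrite andbC.
  have s2 : \sum_(j | P j) p j = \sum_(k | q x <= q k) q k.
    rewrite (partition_big b (fun k => q x <= q k)) //=; apply: eq_bigr => k hk.
    rewrite /q /load; apply: eq_bigl => j; rewrite /P.
    by case: eqP => [->|]; rewrite ?andbT ?andbF.
  have s3 : q x + \sum_(k in S) q k <= \sum_(k | q x <= q k) q k.
    rewrite [X in _ <= X](bigD1 x) //=; apply: lerD => //.
    rewrite big_mkcond [X in _ <= X]big_mkcond /=.
    apply: ler_sum => k _; case: ifP => hk.
      have -> : k != x by apply: contraTneq hk => ->.
      by rewrite hmin.
    by case: ifP => // _; apply: ltW.
  have s4 : forall i, o' i <= L i.
    move=> i; rewrite leNgt; apply/negP => hlt.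
    have ho' : o' i <= load p a i.
      rewrite /o' /load big_mkcondr; apply: ler_sum => j' _.
      by case: ifP => // _; apply: hp.
    case: (boolP [exists j, (a j == i) && P j && (0 < p j)]).
    - case/existsP => j /andP [/andP [/eqP hai hPj] hpj].
      have hs : ~~ (1 < #|[set j' | b j' == b j]|)%N.
        by have := Hn (b j); move: hPj; rewrite /P => ->; rewrite andbT.
      have hqj := single j hs.
      have ho : p j <= load p a i.
        rewrite /load (bigD1 j) ?hai ?eqxx //= lerDl.
        by apply: sumr_ge0 => j' _; apply: hp.
      have hgC : 2 * C i <= gam * C i.
        apply: ler_wpM2r; last exact: gam2.
        exact: le_trans (load_ge0 a i) (hC i).
      have := H' i; have := hC i; rewrite -/(L i).
      move: hPj; rewrite /P hqj => hPj.
      lra.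
    - move/existsPn => hn.
      have : o' i = 0.
        apply: big1 => j /andP [haj hPj].
        have := hn j; rewrite haj hPj /= -leNgt => hle.
        by apply/eqP; rewrite eq_le hle hp.
      by move=> ho0; move: hlt; rewrite ho0 ltNge L0.
  have hx0 : 0 < q x := hq x.
  have : \sum_i o' i <= \sum_i L i by apply: ler_sum => i _; apply: s4.
  rewrite s1 s2 hsumL -/q. lra.
Qed.

Lemma build (a : 'I_n -> 'I_m) (C : 'I_m -> R) (hC : forall i, load p a i <= C i)
  (C0 : forall i, 0 <= C i) :
  exists sg : 'I_m -> 'I_m, forall i, \sum_(k | sg k == i) q k <= gam * C i.
Proof.
have ind : forall k, (k <= m)%N -> exists S : {set 'I_m}, #|S| = k /\
   (forall u v, u \in S -> v \notin S -> q v <= q u) /\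
   exists sg : 'I_m -> 'I_m, forall i, \sum_(u in S | sg u == i) q u <= gam * C i.
  elim => [_|k IH hk].
    exists set0; split; first by rewrite cards0.
    split; first by move=> u v; rewrite in_set0.
    exists id => i; rewrite big_pred0; last by move=> u; rewrite in_set0.
    by apply: mulr_ge0; [exact: gam0|].
  have [S [hS [htop [sg hsg]]]] := IH (ltnW hk).
  have hC0 : (0 < #|~: S|)%N.
    move: hk; rewrite -hS cardsCs card_ord; move: (#|~: S|) => c.
    by case: c => //; rewrite subn0 ltnn.
  case/card_gt0P: hC0 => x0 hx0.
  case: (@arg_maxP _ _ _ x0 (fun k => k \in ~: S) q hx0) => x hx hxmax.
  have hxS : x \notin S by rewrite -in_setC.
  have hmax' : forall k, k \notin S -> q k <= q x.
    by move=> k1 hk1; apply: hxmax; rewrite in_setC.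
  have [i0 hi0] := key a C hC S sg x hxS hmax' (fun k1 hk1 => htop k1 x hk1 hxS).
  exists (x |: S); split; first by rewrite cardsU1 hxS hS.
  split.
    move=> u v; rewrite !in_setU1 negb_or => /orP [/eqP ->|hu] /andP [hvx hvS].
      by apply: hxmax; rewrite in_setC.
    exact: htop.
  exists (fun u => if u == x then i0 else sg u) => i.
  rewrite big_mkcondr big_setU1 //= eqxx.
  rewrite (eq_bigr (fun u => if sg u == i then q u else 0)); last first.
    by move=> u hu; have -> : (u == x) = false by apply/negbTE; apply: contraNneq hxS => <-.
  rewrite -big_mkcondr.
  case: eqP => [<-|hne]; first by rewrite addrC.
  by rewrite add0r.
have [S [hS [_ [sg hsg]]]] := ind m (leqnn m).
have ST : S = setT by apply/eqP; rewrite eqEcard subsetT hS cardsT card_ord leqnn.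
exists sg => i; have := hsg i; rewrite ST.
by under eq_bigl do rewrite in_setT.
Qed.
End Proof.

Theorem lemma2 (R : realFieldType) (n m : nat) (p : 'I_n -> R) (b : 'I_n -> 'I_m) :
  (forall j, 0 <= p j) ->
  (forall k : 'I_m, 0 < load p b k) ->
  robust p b (Num.max 2 (beta p b)).
Proof.
move=> hp hq s hs.
pose F := fun f : {ffun 'I_n -> 'I_m} => makespan p s f.
case: (@arg_minP _ _ _ [ffun j => b j] xpredT F isT) => a0 _ hmin.
have hmk : forall f : 'I_n -> 'I_m, makespan p s f = F [ffun j => f j].
  move=> f; rewrite /F /makespan /load; apply: eq_bigr => i _; congr (_ / _).
  by apply: eq_bigl => j; rewrite ffunE.
set T := makespan p s a0.
have T0 : 0 <= T.
  rewrite /T /makespan; elim/big_ind: _ => //.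
    by move=> u v hu hv; rewrite le_max hu.
  move=> i _; apply: divr_ge0; [exact: load_ge0|exact: ltW].
pose C := fun i => T * s i.
have hC : forall i, load p a0 i <= C i.
  move=> i; rewrite /C -ler_pdivrMr //.
  exact: (le_bigmax _ (fun i => load p a0 i / s i)).
have C0 : forall i, 0 <= C i by move=> i; apply: mulr_ge0 => //; exact: ltW.
have [sg hsg] := @build R n m p b hp hq a0 C hC C0.
exists sg => a.
apply: (le_trans (y := Num.max 2 (beta p b) * T)).
  rewrite /makespan; apply: bigmax_le; first by apply: mulr_ge0 => //; exact: gam0.
  move=> i _; rewrite ler_pdivrMr // -mulrA.
  apply: le_trans (hsg i).
  rewrite /load (partition_big b (fun k => sg k == i)) /=; last by move=> j /eqP ->.
  rewrite le_eqVlt; apply/orP; left; apply/eqP.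
  apply: eq_bigr => k /eqP hk; apply: eq_bigl => j.
  case: (eqVneq (b j) k) => [->|hne]; first by rewrite hk eqxx.
  by rewrite andbF.
apply: ler_wpM2l; first exact: gam0.
by rewrite [makespan p s a]hmk; apply: hmin.
Qed.
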